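(* For every integer $T>0$ and real $\lambda>0$: (i) with $r=\sqrt{T+1}\,n$ and $n\ge r^2/\lambda^2$, $\mathsf{VC}\text{-}\mathsf{dim}\big(\mathbb{H}_{r,\lambda}(\mathcal{E}_{\mathsf{WL}}(n,d_T))\big)\in\Theta(r^2/\lambda^2)$; (ii) with $r=\sqrt{T/(T+1)}$ and $n\ge r^2/\lambda^2$, $\mathsf{VC}\text{-}\mathsf{dim}\big(\mathbb{H}_{1,\lambda}(\overline{\mathcal{E}}_{\mathsf{WL}}(n,d_T))\big)\in\Theta(1/\lambda^2)$.
   Context: $\mathcal{G}_n$ is the set of (unlabeled, simple, undirected) graphs on $n$ vertices. $1$-WL colouring: $C^1_0$ constant, $C^1_t(v)=\mathsf{RELABEL}(C^1_{t-1}(v),\{\!\{C^1_{t-1}(u):u\in N(v)\}\!\})$ with a fixed injective $\mathsf{RELABEL}$ shared by all graphs. Let $\Sigma_t$ be the (finite) set of colours occurring at round $t$ over all graphs in $\mathcal{G}_n$; $\phi_t(G)\in\mathbb{R}^{\Sigma_t}$ has entry $\phi_t(G)_c=|\{v:C^1_t(v)=c\}|$, and $\phi^{(T)}_{\mathsf{WL}}(G)=[\phi_0(G),\dots,\phi_T(G)]\in\mathbb{R}^{d_T}$ (concatenation), $\overline{\phi^{(T)}_{\mathsf{WL}}}(G)=\phi^{(T)}_{\mathsf{WL}}(G)/\|\phi^{(T)}_{\mathsf{WL}}(G)\|$ (Euclidean norm). $\mathcal{E}_{\mathsf{WL}}(n,d_T)=\{\phi^{(T)}_{\mathsf{WL}}\}$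 and $\overline{\mathcal{E}}_{\mathsf{WL}}(n,d_T)=\{\overline{\phi^{(T)}_{\mathsf{WL}}}\}$ (as maps $\mathcal{G}_n\to\mathbb{R}^{d_T}$). A labelled sample $(\mathbf{x}_1,y_1),\dots,(\mathbf{x}_s,y_s)\in\mathbb{R}^d\times\{0,1\}$ is $(r,\lambda)$-separable if all $\mathbf{x}_i$ lie in some Euclidean ball of radius $r$ and the Euclidean distance between the convex hulls of $\{\mathbf{x}_i:y_i=0\}$ and $\{\mathbf{x}_i:y_i=1\}$ is at least $2\lambda$. For a class $\mathcal{E}$ of maps $\mathcal{G}_n\to\mathbb{R}^d$, $\mathbb{H}_{r,\lambda}(\mathcal{E})$ is the set of partial concepts $h:\mathcal{G}_n\to\{0,1,\star\}$ such that for all $G_1,\dots,G_s$ in $\mathrm{supp}(h)=\{G:h(G)\ne\star\}$ there is $\mathrm{emb}\in\mathcal{E}$ with $(\mathrm{emb}(G_1),h(G_1)),\dots,(\mathrm{emb}(G_s),h(G_s))$ $(r,\lambda)$-separable. The VC dimension of a partial concept class is the largest $m$ such that some $\{x_1,\dots,x_m\}$ is shattered, i.e. for every $\tau\in\{0,1\}^m$ there is $h$ in the class with $h(x_i)=\tau_i$ for all $i$. *)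

(* Defs.v *)
From HB Require Import structures.
From mathcomp Require Import all_boot all_order all_algebra all_fingroup.
From mathcomp Require Import boolp reals.

Set Implicit Arguments.
Unset Strict Implicit.
Unset Printing Implicit Defensive.

Import Order.TTheory GRing.Theory Num.Theory.
Local Open Scope ring_scope.

Definition is_simple n (E : {set 'I_n * 'I_n}) : bool :=
  [forall u, forall v, ((u, v) \in E) == ((v, u) \in E)] &&
  [forall u, (u, u) \notin E].

Definition perm_graph n (s : 'S_n) (E : {set 'I_n * 'I_n}) : {set 'I_n * 'I_n} :=
  [set (s x.1, s x.2) | x in E].

Definition is_canon n (E : {set 'I_n * 'I_n}) : bool :=
  [forall s : 'S_n, (enum_rank E <= enum_rank (perm_graph s E))%N].

(* G_n : unlabelled simple graphs on n vertices, one canonical labelled  *)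
(* representative per isomorphism class.                                *)
Definition ugraph n : finType := {E : {set 'I_n * 'I_n} | is_simple E && is_canon E}.

Definition adj n (G : ugraph n) (u v : 'I_n) : bool := (u, v) \in val G.

(* 1-WL colouring. Colours are natural numbers; c0 is the constant     *)
(* initial colour; rl is the RELABEL function, applied to the previous  *)
(* colour and the multiset of neighbour colours (multisets represented  *)
(* by sorted sequences).                                                *)
Definition relabel_injective (rl : nat -> seq nat -> nat) : Prop :=
  forall a s b t, rl a (sort leq s) = rl b (sort leq t) -> a = b /\ perm_eq s t.

Fixpoint wl (c0 : nat) (rl : nat -> seq nat -> nat) n (G : ugraph n) (t : nat)
    (v : 'I_n) : nat :=
  match t with
  | 0 => c0
  | t'.+1 => rl (wl c0 rl G t' v)
                (sort leq [seq wl c0 rl G t' u | u <- enum 'I_n & adj G v u])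
  end.

Definition Sigma c0 rl n (t : nat) : seq nat :=
  undup (flatten [seq [seq wl c0 rl G t v | v <- enum 'I_n] | G <- enum (ugraph n)]).

(* coordinates of the concatenation [phi_0, ..., phi_T] *)
Definition wl_idx c0 rl n (T : nat) : seq (nat * nat) :=
  flatten [seq [seq (t, c) | c <- Sigma c0 rl n t] | t <- iota 0 T.+1].

Definition dT c0 rl n T : nat := size (wl_idx c0 rl n T).

Definition phiWL (R : realType) c0 rl n T (G : ugraph n) : 'rV[R]_(dT c0 rl n T) :=
  \row_k (#|[set v | wl c0 rl G (nth (0, 0)%N (wl_idx c0 rl n T) k).1 v
                   == (nth (0, 0)%N (wl_idx c0 rl n T) k).2]|)%:R.

Definition enorm (R : realType) d (x : 'rV[R]_d) : R :=
  Num.sqrt (\sum_i (x 0 i) ^+ 2).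

Definition phiWLbar (R : realType) c0 rl n T (G : ugraph n) : 'rV[R]_(dT c0 rl n T) :=
  (enorm (phiWL R c0 rl T G))^-1 *: phiWL R c0 rl T G.

Definition E_WL (R : realType) c0 rl n T : (ugraph n -> 'rV[R]_(dT c0 rl n T)) -> Prop :=
  fun emb => emb = phiWL R c0 rl T.
Definition Ebar_WL (R : realType) c0 rl n T : (ugraph n -> 'rV[R]_(dT c0 rl n T)) -> Prop :=
  fun emb => emb = phiWLbar R c0 rl T.

(* (r, lambda)-separability of a labelled sample.  The convex hulls of  *)
(* the two classes are at distance >= 2 lambda iff every convex         *)
(* combination of class-0 points is at distance >= 2 lambda from every  *)
(* convex combination of class-1 points (vacuous if a class is empty).  *)
Definition separable (R : realType) d (r lam : R) (s : seq ('rV[R]_d * bool)) : Prop :=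
  (exists c : 'rV[R]_d, forall p, p \in s -> enorm (p.1 - c) <= r) /\
  (forall a b : 'I_(size s) -> R,
      (forall i, 0 <= a i) -> (forall i, 0 <= b i) ->
      (forall i : 'I_(size s), (nth (0, false) s i).2 -> a i = 0) ->
      (forall i : 'I_(size s), ~~ (nth (0, false) s i).2 -> b i = 0) ->
      \sum_i a i = 1 -> \sum_i b i = 1 ->
      2 * lam <= enorm (\sum_i a i *: (nth (0, false) s i).1
                        - \sum_i b i *: (nth (0, false) s i).1)).

(* partial concepts G_n -> {0,1,*}; None stands for * ; Some true = 1 *)
Definition pconcept n := ugraph n -> option bool.

Definition Hclass (R : realType) n d (E : (ugraph n -> 'rV[R]_d) -> Prop) (r lam : R)
    (h : pconcept n) : Prop :=
  forall s : seq (ugraph n), (forall G, G \in s -> h G != None) ->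
  exists emb, E emb /\
    separable r lam [seq (emb G, odflt false (h G)) | G <- s].

Definition shattered n (C : pconcept n -> Prop) (S : {set ugraph n}) : Prop :=
  forall tau : ugraph n -> bool,
  exists h, C h /\ forall G, G \in S -> h G = Some (tau G).

Definition VCdim n (C : pconcept n -> Prop) : nat :=
  \max_(S : {set ugraph n} | `[< shattered C S >]) #|S|.

Arguments E_WL R c0 rl n T : clear implicits.
Arguments Ebar_WL R c0 rl n T : clear implicits.

(* Main.v *)
Require Import Defs.
From HB Require Import structures.
From mathcomp Require Import all_boot all_order all_algebra all_fingroup.
From mathcomp Require Import boolp reals.
From mathcomp Require Import ring lra zify.
Set Implicit Arguments.
Unset Strict Implicit.
Unset Printing Implicit Defensive.
Import Order.TTheory GRing.Theory Num.Theory.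

Lemma card_count n (P : pred 'I_n) : #|[set u | P u]| = count P (enum 'I_n).
Proof. by rewrite cardsE cardE -size_filter enumT /enum_mem. Qed.

Lemma map_const_nseq (T U : Type) (c : U) (l : seq T) : [seq c | _ <- l] = nseq (size l) c.
Proof. by elim: l => //= x l ->. Qed.

Section Canon.
Variable n : nat.
Implicit Types (E : {set 'I_n * 'I_n}) (s : 'S_n).

Lemma perm_graphM s t E : perm_graph t (perm_graph s E) = perm_graph (s * t)%g E.
Proof.
rewrite /perm_graph -imset_comp; apply: eq_imset => x; by rewrite /= !permM.
Qed.

Lemma mem_perm_graph s E x y : ((s x, s y) \in perm_graph s E) = ((x, y) \in E).
Proof.
have inj : injective (fun p : 'I_n * 'I_n => (s p.1, s p.2)).
  by move=> [a b] [c d] /= [/perm_inj -> /perm_inj ->].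
exact: (mem_imset (mem E) (x, y) inj).
Qed.

Lemma mem_perm_graph' s E u v : ((u, v) \in perm_graph s E) = (((s^-1)%g u, (s^-1)%g v) \in E).
Proof. by rewrite -{1}(permKV s u) -{1}(permKV s v) mem_perm_graph. Qed.

Lemma perm_graph_simple s E : is_simple E -> is_simple (perm_graph s E).
Proof.
case/andP => /forallP H1 /forallP H2; apply/andP; split.
  apply/forallP => u; apply/forallP => v; rewrite !mem_perm_graph'.
  exact: (forallP (H1 _)).
by apply/forallP => u; rewrite mem_perm_graph'.
Qed.

Definition canon_perm E : 'S_n := [arg min_(s < 1%g) enum_rank (perm_graph s E)].

Lemma canon_is_canon E : is_canon (perm_graph (canon_perm E) E).
Proof.
apply/forallP => s; rewrite perm_graphM /canon_perm.
by case: arg_minnP => // s0 _ H; apply: H.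
Qed.

Definition mkug E (H : is_simple E) : ugraph n :=
  exist _ (perm_graph (canon_perm E) E)
    (introT andP (conj (perm_graph_simple (canon_perm E) H) (canon_is_canon E))).

Lemma adj_mkug E (H : is_simple E) u v :
  adj (mkug H) u v = ((((canon_perm E)^-1)%g u, ((canon_perm E)^-1)%g v) \in E).
Proof. by rewrite /adj /= mem_perm_graph'. Qed.

Lemma deg_mkug E (H : is_simple E) v :
  #|[set u | adj (mkug H) v u]| = #|[set u | (((canon_perm E)^-1)%g v, u) \in E]|.
Proof.
set s := canon_perm E; set w := (s^-1)%g v.
rewrite -[RHS](card_imset _ (@perm_inj _ s)) (can_imset_pre _ (permK s)).
by apply: eq_card => u; rewrite !inE adj_mkug.
Qed.

End Canon.

Section Circ.
Variable p : nat.
Local Open Scope ring_scope.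

Definition Dset (d : nat) : {set 'I_p.+1} :=
  [set x : 'I_p.+1 | (0 < x)%N && ((x <= d)%N || (p.+1 - d <= x)%N)].

Definition Ecirc d : {set 'I_p.+1 * 'I_p.+1} := [set e | e.2 - e.1 \in Dset d].

Lemma DsetN d (x : 'I_p.+1) : (- x \in Dset d) = (x \in Dset d).
Proof.
rewrite !inE.
have xl := ltn_ord x.
case: (posnP x) => [x0|xp].
  have -> : x = 0 by apply: val_inj.
  by rewrite oppr0.
have -> : nat_of_ord (- x) = (p.+1 - x)%N by rewrite /= modn_small //; lia.
rewrite /=; apply/idP/idP; lia.
Qed.

Lemma mem_Ecirc d e : (e \in Ecirc d) = (e.2 - e.1 \in Dset d).
Proof. by rewrite /Ecirc in_set. Qed.

Lemma Ecirc_simple d : is_simple (Ecirc d).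
Proof.
apply/andP; split.
  apply/forallP => u; apply/forallP => v; rewrite !mem_Ecirc /=.
  by rewrite -DsetN opprB.
by apply/forallP => u; rewrite mem_Ecirc subrr inE.
Qed.

Lemma deg_Ecirc d (w : 'I_p.+1) : #|[set u | (w, u) \in Ecirc d]| = #|Dset d|.
Proof.
rewrite -[RHS](card_imset _ (addIr w)) (can_imset_pre _ (addrK w)).
by apply: eq_card => u; rewrite !inE.
Qed.

Lemma Dset_step d : (d.*2.+1 <= p)%N -> (#|Dset d| < #|Dset d.+1|)%N.
Proof.
move=> hd; apply: proper_card; apply/properP; split.
  apply/subsetP => x; rewrite !inE => /andP [-> /=] /orP [h|h]; apply/orP; [left|right]; lia.
have dl : (d.+1 < p.+1)%N by lia.
exists (Ordinal dl); rewrite !inE /=; lia.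
Qed.

Lemma Dset_mono d e : ((d + e).*2.+1 <= p)%N -> (#|Dset d| < #|Dset (d + e).+1|)%N.
Proof.
elim: e => [|e IH] h; first by move: h; rewrite addn0 => h; apply: Dset_step.
apply: ltn_trans (IH _) _; first lia.
by rewrite addnS; apply: Dset_step; rewrite -addnS.
Qed.

End Circ.

Section WLreg.
Variables (c0 : nat) (rl : nat -> seq nat -> nat).
Hypothesis Hrl : relabel_injective rl.

Fixpoint W t k := if t is t'.+1 then rl (W t' k) (sort leq (nseq k (W t' k))) else c0.

Lemma W_inj t k k' : (0 < t)%N -> W t k = W t k' -> k = k'.
Proof. by case: t => // t _ /= /Hrl [_ /perm_size]; rewrite !size_nseq. Qed.

Lemma wl_reg n (G : ugraph n) kd : (forall v, #|[set u | adj G v u]| = kd) ->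
  forall t v, wl c0 rl G t v = W t kd.
Proof.
move=> H; elim=> //= t IH v.
by rewrite IH (eq_map IH) map_const_nseq size_filter -card_count H.
Qed.

End WLreg.

Definition Gc p d : ugraph p.+1 := mkug (Ecirc_simple p d).

Lemma Gc_reg p d v : #|[set u | adj (Gc p d) v u]| = #|Dset p d|.
Proof. by rewrite deg_mkug deg_Ecirc. Qed.

Definition Sfam p m : {set ugraph p.+1} := [set Gc p (nat_of_ord d) | d : 'I_m].

Lemma Dset_inj p m (d d' : 'I_m) : (m <= 1 \/ m.*2 <= p.+1)%N ->
  #|Dset p d| = #|Dset p d'| -> d = d'.
Proof.
move=> hm.
have key : forall a b : 'I_m, (a < b)%N -> (#|Dset p a| < #|Dset p b|)%N.
  move=> a b ab.
  have -> : nat_of_ord b = (a + (b - a).-1).+1 by lia.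
  apply: Dset_mono.
  have := ltn_ord b; case: hm => hm; lia.
case: (ltngtP d d') => [h|h|h] E.
- by have := key _ _ h; rewrite E ltnn.
- by have := key _ _ h; rewrite E ltnn.
- exact: val_inj.
Qed.

Lemma Sfam_card p m : (m <= 1 \/ m.*2 <= p.+1)%N -> #|Sfam p m| = m.
Proof.
move=> hm; rewrite card_imset ?card_ord // => d d' E.
apply: (Dset_inj hm); rewrite -(Gc_reg (nat_of_ord d) (@ord0 p)) -(Gc_reg (nat_of_ord d') (@ord0 p)).
by rewrite E.
Qed.

Local Open Scope ring_scope.

Section Vec.
Variable R : realType.

Definition sumsq d (x : 'rV[R]_d) : R := \sum_i (x 0 i) ^+ 2.
Definition dotv d (x y : 'rV[R]_d) : R := \sum_i (x 0 i * y 0 i).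

Lemma sumsq_ge0 d (x : 'rV[R]_d) : 0 <= sumsq x.
Proof. by apply: sumr_ge0 => i _; apply: sqr_ge0. Qed.

Lemma enormE d (x : 'rV[R]_d) : enorm x ^+ 2 = sumsq x.
Proof. by rewrite /enorm sqr_sqrtr // sumsq_ge0. Qed.

Lemma enorm_ge0 d (x : 'rV[R]_d) : 0 <= enorm x.
Proof. exact: sqrtr_ge0. Qed.

Lemma enorm_le d (x : 'rV[R]_d) r : 0 <= r -> (enorm x <= r) = (sumsq x <= r ^+ 2).
Proof.
move=> r0; rewrite -enormE ler_sqr // nnegrE; exact: enorm_ge0.
Qed.

Lemma enorm_ge d (x : 'rV[R]_d) r : 0 <= r -> (r <= enorm x) = (r ^+ 2 <= sumsq x).
Proof.
move=> r0; rewrite -enormE ler_sqr // nnegrE; exact: enorm_ge0.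
Qed.

Lemma sumsqD d (x y : 'rV[R]_d) : sumsq (x + y) = sumsq x + 2 * dotv x y + sumsq y.
Proof.
rewrite /sumsq /dotv mulr_sumr -!big_split /=; apply: eq_bigr => i _.
rewrite !mxE; ring.
Qed.

Lemma sumsqN d (x : 'rV[R]_d) : sumsq (- x) = sumsq x.
Proof. by rewrite /sumsq; apply: eq_bigr => i _; rewrite mxE sqrrN. Qed.

Lemma dotvN d (x y : 'rV[R]_d) : dotv x (- y) = - dotv x y.
Proof. rewrite /dotv -sumrN; apply: eq_bigr => i _; rewrite mxE; ring. Qed.

Lemma sumsqZ d (a : R) (x : 'rV[R]_d) : sumsq (a *: x) = a ^+ 2 * sumsq x.
Proof. rewrite /sumsq mulr_sumr; apply: eq_bigr => i _; rewrite mxE; ring. Qed.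

Lemma sumsqB_le d (x y : 'rV[R]_d) : sumsq (x - y) <= 2 * sumsq x + 2 * sumsq y.
Proof.
rewrite /sumsq !mulr_sumr -big_split /=; apply: ler_sum => i _.
rewrite !mxE; have := sqr_ge0 (x 0 i + y 0 i); nra.
Qed.

Lemma greedy D (dd : nat -> 'rV[R]_D) k : exists sg : nat -> bool,
  sumsq (\sum_(0 <= j < k) (if sg j then - dd j else dd j)) <= \sum_(0 <= j < k) sumsq (dd j).
Proof.
elim: k => [|k [sg IH]].
  exists (fun _ => false); rewrite !big_geq // /sumsq big1 // => i _.
  by rewrite mxE expr0n.
set u := \sum_(0 <= j < k) _ in IH.
exists (fun j => if j == k then 0 < dotv u (dd k) else sg j).
rewrite !big_nat_recr //= eqxx.
have -> : \sum_(0 <= i < k) (if (if i == k then 0 < dotv u (dd k) else sg i) then - dd i else dd i) = u.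
  rewrite big_nat_cond [u]big_nat_cond; apply: eq_bigr => i /andP [/andP [_ ik] _].
  by rewrite ltn_eqF.
case: ifP => hp.
  rewrite sumsqD sumsqN dotvN. lra.
rewrite sumsqD. move/negbT: hp; rewrite -leNgt => hp. lra.
Qed.

End Vec.

Lemma pair_sum (V : zmodType) (m k : nat) (g : nat -> V) : (k + k <= m)%N ->
  \sum_(0 <= i < m) (if (i < k + k)%N then g i else 0) =
  \sum_(0 <= j < k) (g j + g (j + k)%N).
Proof.
move=> hm.
rewrite (big_cat_nat _ (n := k + k)) //= [X in _ + X]big_nat_cond [X in _ + X]big1; last first.
  by move=> i /andP [/andP [hi _] _]; rewrite ltnNge hi.
rewrite addr0 (big_cat_nat _ (n := k)) ?leq_addr //= big_split /=.
congr (_ + _).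
  by apply: eq_big_nat => i /andP [_ hi]; rewrite (leq_trans hi) ?leq_addr.
rewrite -{1}(add0n k) big_addn addnK; apply: eq_big_nat => i /andP [_ hi].
by rewrite ltn_add2r hi.
Qed.

Section Upper.
Variable R : realType.

Lemma VC_upper_set n d (E : (ugraph n -> 'rV[R]_d) -> Prop) emb0 (r lam : R) :
  (forall emb, E emb -> emb = emb0) -> 0 < lam ->
  forall S, shattered (Hclass E r lam) S -> #|S|%:R <= 2 * (r ^+ 2 / lam ^+ 2) + 1.
Proof.
move=> HE lam0 S HS.
have q0 : 0 <= r ^+ 2 / lam ^+ 2 by apply: divr_ge0; apply: sqr_ge0.
case: (leqP #|S| 1) => hm.
  apply: (le_trans (y := 1)); first by have : (#|S|%:R : R) <= 1%:R by rewrite ler_nat.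
  lra.
set m := #|S| in hm *.
set L := enum S.
have sL : size L = m by rewrite /L -cardE.
have uL : uniq L by exact: enum_uniq.
set k := m./2.
have k1 : (1 <= k)%N by rewrite /k -(half_bit_double 1 false) half_leq.
have k2 : (k + k <= m)%N by rewrite addnn /k -{2}(odd_double_half m) leq_addl.
have k3 : (m <= (k + k).+1)%N by rewrite addnn /k -{1}(odd_double_half m); case: odd.
have [x0 _] : exists x0 : ugraph n, x0 \in S.
  by apply/set0Pn; rewrite -card_gt0 (ltnW hm).
pose x j := emb0 (nth x0 L j).
pose dd j := x j - x (j + k)%N.
have [sg Hsg] := greedy dd k.
pose labn i := if (i < k)%N then sg i else if (i < k + k)%N then ~~ sg (i - k)%N else false.
pose tau G := labn (index G L).
have [h [Hh HhS]] := HS tau.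
have Hsup : forall G, G \in L -> h G != None.
  by move=> G; rewrite mem_enum => /HhS ->.
have [emb [/HE Eemb Hsep]] := Hh L Hsup.
rewrite Eemb in Hsep; clear emb Eemb.
set s' := [seq _ | G <- L] in Hsep.
have ss : size s' = m by rewrite size_map.
have FE : forall i, (i < m)%N -> nth (0, false) s' i = (x i, labn i).
  move=> i hi; rewrite (nth_map x0) ?sL // HhS; last by rewrite -mem_enum mem_nth ?sL.
  by rewrite /tau index_uniq ?sL.
case: Hsep => [[c Hc] Hsep].
have r0 : 0 <= r.
  apply: le_trans (Hc (nth (0, false) s' 0) _); first exact: enorm_ge0.
  by rewrite mem_nth // ss (leq_trans _ hm).
have Hx : forall j, (j < m)%N -> sumsq (x j - c) <= r ^+ 2.
  move=> j hj; rewrite -enorm_le //.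
  have := Hc (nth (0, false) s' j); rewrite FE //; apply; rewrite -(FE j hj) mem_nth // ss //.
have Hdd : forall j, (j < k)%N -> sumsq (dd j) <= 4 * r ^+ 2.
  move=> j hj.
  have -> : dd j = (x j - c) - (x (j + k)%N - c) by rewrite opprB addrA subrK.
  have h1 := Hx j (leq_trans hj (leq_trans (leq_addr _ _) k2)).
  have h2 : sumsq (x (j + k)%N - c) <= r ^+ 2 by apply: Hx; apply: leq_trans k2; rewrite ltn_add2r.
  have := sumsqB_le (x j - c) (x (j + k)%N - c); lra.
pose A i := if (i < k + k)%N && ~~ labn i then k%:R^-1 else 0 : R.
pose B i := if (i < k + k)%N && labn i then k%:R^-1 else 0 : R.
have kR : 0 < k%:R :> R by rewrite ltr0n.
have sumA : \sum_(i < size s') A i = 1.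
  rewrite ss -(big_mkord xpredT A) (eq_big_nat _ _ (F2 := fun i => if (i < k + k)%N then A i else 0)); last first.
    by move=> i _; rewrite /A; case: (i < k + k)%N.
  rewrite pair_sum // (eq_big_nat _ _ (F2 := fun _ => k%:R^-1)); last first.
    move=> j /andP [_ hj]; rewrite /A /labn hj (leq_trans hj (leq_addr _ _)) /=.
    rewrite ltn_add2r hj ltnNge leq_addl /= addnK.
    by case: (sg j); rewrite /= ?add0r ?addr0.
  rewrite sumr_const_nat subn0 -[_ *+ _]mulr_natr mulVf //; lra.
have sumB : \sum_(i < size s') B i = 1.
  rewrite ss -(big_mkord xpredT B) (eq_big_nat _ _ (F2 := fun i => if (i < k + k)%N then B i else 0)); last first.
    by move=> i _; rewrite /B; case: (i < k + k)%N.
  rewrite pair_sum // (eq_big_nat _ _ (F2 := fun _ => k%:R^-1)); last first.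
    move=> j /andP [_ hj]; rewrite /B /labn hj (leq_trans hj (leq_addr _ _)) /=.
    rewrite ltn_add2r hj ltnNge leq_addl /= addnK.
    by case: (sg j); rewrite /= ?add0r ?addr0.
  rewrite sumr_const_nat subn0 -[_ *+ _]mulr_natr mulVf //; lra.
have := Hsep (fun i => A i) (fun i => B i).
have Hv : \sum_(i < size s') A i *: (nth (0, false) s' i).1 - \sum_(i < size s') B i *: (nth (0, false) s' i).1
   = k%:R^-1 *: \sum_(0 <= j < k) (if sg j then - dd j else dd j).
  rewrite -sumrB ss -(big_mkord xpredT (fun i => A i *: (nth (0, false) s' i).1 - B i *: (nth (0, false) s' i).1)).
  rewrite (eq_big_nat _ _ (F2 := fun i => if (i < k + k)%N then (A i - B i) *: x i else 0)); last first.
    move=> i /andP [_ hi]; rewrite FE //= -scalerBl /A /B; case: (i < k + k)%N => //=.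
    by rewrite subr0 scale0r.
  rewrite pair_sum // scaler_sumr; apply: eq_big_nat => j /andP [_ hj].
  rewrite /A /B /labn hj (leq_trans hj (leq_addr _ _)) /= ltn_add2r hj ltnNge leq_addl /= addnK /dd.
  case: (sg j) => /=; rewrite ?subr0 ?sub0r ?scaleNr ?scalerN ?scalerBr //.
  by rewrite opprB addrC.
rewrite Hv => /(_ _ _ _ _ sumA sumB).
have H1 : forall i, 0 <= A i by move=> i; rewrite /A; case: ifP => // _; rewrite invr_ge0 ltW.
have H2 : forall i, 0 <= B i by move=> i; rewrite /B; case: ifP => // _; rewrite invr_ge0 ltW.
move=> /(_ (fun i => H1 i) (fun i => H2 i)).
have H3 : forall i : 'I_(size s'), (nth (0, false) s' i).2 -> A i = 0.
  by move=> i; rewrite FE -?ss // /A /= => ->; rewrite andbF.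
have H4 : forall i : 'I_(size s'), ~~ (nth (0, false) s' i).2 -> B i = 0.
  by move=> i; rewrite FE -?ss // /B /= => /negbTE ->; rewrite andbF.
move=> /(_ H3 H4).
move=> H0.
have H : (2 * lam) ^+ 2 <= sumsq (k%:R^-1 *: \sum_(0 <= j < k) (if sg j then - dd j else dd j)).
  by rewrite -enorm_ge // mulr_ge0 // ltW.
rewrite sumsqZ in H.
set V := sumsq _ in Hsg H.
have Hs : V <= 4 * r ^+ 2 * k%:R.
  have := le_trans Hsg (ler_sum_nat (fun j hj => Hdd j (proj2 (andP hj)))).
  by rewrite sumr_const_nat subn0 mulr_natr.
have HK : k%:R^-1 ^+ 2 * k%:R ^+ 2 = 1 :> R by rewrite -exprMn mulVf ?expr1n // gt_eqF.
have H5 : (2 * lam) ^+ 2 * k%:R ^+ 2 <= V.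
  by have := ler_wpM2r (sqr_ge0 (k%:R : R)) H; rewrite [_ * V * _]mulrAC HK mul1r.
have H6 : k%:R * lam ^+ 2 <= r ^+ 2 by nra.
have H8 : k%:R <= r ^+ 2 / lam ^+ 2.
  by rewrite ler_pdivlMr ?exprn_gt0.
have : (m%:R : R) <= (k + k).+1%:R by rewrite ler_nat.
rewrite -addn1 natrD natrD; lra.
Qed.

End Upper.

Section Lower.
Variable R : realType.

Lemma sum_ind (s : seq nat) a (y : R) : uniq s -> a \in s ->
  \sum_(c <- s) (if c == a then y else 0) = y.
Proof.
elim: s => // x s IH /= /andP [xs us]; rewrite inE big_cons => /orP [/eqP ->|aS].
  rewrite eqxx big1_seq ?addr0 // => c /andP [_ cs].
  by case: eqP => // ca; move: xs; rewrite -ca cs.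
have -> : (x == a) = false by apply/negbTE; apply: contraNneq xs => ->.
by rewrite IH // add0r.
Qed.

Lemma sq_sum_ind (I : finType) (S : {set I}) (f : I -> nat) (s : seq nat) (y : I -> R) :
  {in S &, injective f} -> uniq s -> (forall G, G \in S -> f G \in s) ->
  \sum_(c <- s) (\sum_(G in S) (if f G == c then y G else 0)) ^+ 2 = \sum_(G in S) y G ^+ 2.
Proof.
move=> finj us fs.
have step : forall c, (\sum_(G in S) (if f G == c then y G else 0)) ^+ 2 =
    \sum_(G in S) (if f G == c then y G ^+ 2 else 0).
  move=> c; case: (pickP [pred G | (G \in S) && (f G == c)]) => [G0 /andP [G0S /eqP fc]|none].
    rewrite (bigD1 G0) //= [RHS](bigD1 G0) //= fc eqxx !big1 ?addr0 //.
      move=> G /andP [GS GG0]; case: eqP => // fG; case/eqP: GG0; apply: finj => //; by rewrite fG.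
    move=> G /andP [GS GG0]; case: eqP => // fG; case/eqP: GG0; apply: finj => //; by rewrite fG.
  rewrite !big1 ?expr0n // => G GS; have := none G; rewrite /= GS /=; by move=> ->.
under eq_bigr => c _ do rewrite step.
rewrite exchange_big /=; apply: eq_bigr => G GS.
under eq_bigr => c _ do rewrite (eq_sym (f G)).
by rewrite sum_ind // fs.
Qed.

Lemma CS (I : finType) (S : {set I}) (u : I -> R) :
  (\sum_(G in S) u G) ^+ 2 <= #|S|%:R * \sum_(G in S) u G ^+ 2.
Proof.
case: (posnP #|S|) => [S0|Sp].
  have -> : S = set0 by apply/eqP; rewrite -cards_eq0 S0.
  by rewrite !big_set0 expr0n /= cards0 mul0r.
set m := #|S|%:R; set U := \sum_(G in S) u G.
have m0 : 0 < m by rewrite ltr0n.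
have E : forall mu, \sum_(G in S) (u G - mu) ^+ 2 =
   \sum_(G in S) u G ^+ 2 - 2 * mu * U + mu ^+ 2 * m.
  move=> mu; rewrite /m mulr_natr -sumr_const /U mulr_sumr -sumrB -big_split /=.
  by apply: eq_bigr => G _; ring.
have H : 0 <= \sum_(G in S) u G ^+ 2 - 2 * (U / m) * U + (U / m) ^+ 2 * m.
  by rewrite -E; apply: sumr_ge0 => G _; apply: sqr_ge0.
have : 0 <= m * (\sum_(G in S) u G ^+ 2) - U ^+ 2.
  have -> : m * (\sum_(G in S) u G ^+ 2) - U ^+ 2 =
     m * (\sum_(G in S) u G ^+ 2 - 2 * (U / m) * U + (U / m) ^+ 2 * m).
    by field; rewrite gt_eqF.
  by rewrite mulr_ge0 // ltW.
lra.
Qed.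


Lemma sum_iota_const a b (x : R) : \sum_(t <- iota a b) x = x *+ b.
Proof.
elim: b a => [|b IH] a; first by rewrite big_nil.
by rewrite /= big_cons IH mulrS.
Qed.

Lemma sumsq_eq d (x : 'rV[R]_d) (f : 'I_d -> R) : (forall k, x 0 k = f k) -> sumsq x = \sum_k f k ^+ 2.
Proof. by move=> H; rewrite /sumsq; apply: eq_bigr => k _; rewrite H. Qed.

Lemma part_sum (I J : finType) (g : I -> J) (S : {set J}) (F : I -> R) :
  (forall i, g i \in S) -> \sum_i F i = \sum_(G in S) \sum_(i | g i == G) F i.
Proof. by move=> H; rewrite (partition_big g (mem S)) //=. Qed.

Variables (c0 : nat) (rl : nat -> seq nat -> nat).
Hypothesis Hrl : relabel_injective rl.

Lemma sum_idx n T (F : nat * nat -> R) :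
  \sum_(k < dT c0 rl n T) F (nth (0, 0)%N (wl_idx c0 rl n T) k) =
  \sum_(t <- iota 0 T.+1) \sum_(c <- Sigma c0 rl n t) F (t, c).
Proof.
rewrite /dT -(big_mkord xpredT (fun k => F (nth (0, 0)%N (wl_idx c0 rl n T) k))).
rewrite -(big_nth (0, 0)%N xpredT F) /wl_idx big_flatten big_map; apply: eq_bigr => t _.
by rewrite big_map.
Qed.

Lemma phi_entry p T (G : ugraph p.+1) kd : (forall v, #|[set u | adj G v u]| = kd) ->
  forall k, phiWL R c0 rl T G 0 k =
  (if W c0 rl (nth (0, 0)%N (wl_idx c0 rl p.+1 T) k).1 kd == (nth (0, 0)%N (wl_idx c0 rl p.+1 T) k).2
   then p.+1%:R else 0).
Proof.
move=> H k; rewrite /phiWL mxE; set q := nth _ _ _.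
have -> : [set v | wl c0 rl G q.1 v == q.2] =
   if W c0 rl q.1 kd == q.2 then setT else set0.
  by apply/setP => v; rewrite inE (wl_reg _ _ H); case: ifP; rewrite inE.
by case: ifP; rewrite ?cardsT ?card_ord ?cards0.
Qed.

Lemma W_in_Sigma p (G : ugraph p.+1) kd : (forall v, #|[set u | adj G v u]| = kd) ->
  forall t, W c0 rl t kd \in Sigma c0 rl p.+1 t.
Proof.
move=> H t; rewrite /Sigma mem_undup; apply/flatten_mapP; exists G; first by rewrite mem_enum.
by apply/mapP; exists ord0; [rewrite mem_enum | rewrite (wl_reg _ _ H)].
Qed.

Lemma sumsq_phi_reg p T (G : ugraph p.+1) kd : (forall v, #|[set u | adj G v u]| = kd) ->
  sumsq (phiWL R c0 rl T G) = T.+1%:R * p.+1%:R ^+ 2.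
Proof.
move=> H; rewrite /sumsq.
under eq_bigr => k _ do rewrite (phi_entry H).
rewrite (sum_idx _ _ (fun q => (if W c0 rl q.1 kd == q.2 then p.+1%:R else 0) ^+ 2)).
rewrite (eq_bigr (fun _ => p.+1%:R ^+ 2)) ?sum_iota_const ?mulr_natl // => t _ /=.
under eq_bigr => c _ do rewrite (fun_if (fun x : R => x ^+ 2)) expr0n /= eq_sym.
by rewrite sum_ind ?undup_uniq ?(W_in_Sigma H).
Qed.


Lemma VC_lower p T (lam beta r : R) (S : {set ugraph p.+1}) (kd : ugraph p.+1 -> nat)
  (E : (ugraph p.+1 -> 'rV[R]_(dT c0 rl p.+1 T)) -> Prop) emb0 :
  (0 < T)%N -> 0 <= lam -> E emb0 ->
  (forall G, G \in S -> emb0 G = beta *: phiWL R c0 rl T G) ->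
  (forall G, G \in S -> enorm (emb0 G) <= r) ->
  {in S &, injective kd} ->
  (forall G, G \in S -> forall v, #|[set u | adj G v u]| = kd G) ->
  (#|S| <= 1)%N \/ #|S|%:R * lam ^+ 2 <= beta ^+ 2 * T%:R * p.+1%:R ^+ 2 ->
  shattered (Hclass E r lam) S.
Proof.
move=> T0 lam0 Eemb Hemb Hball kinj Hreg Hm tau.
pose h G := if G \in S then Some (tau G) else None.
exists h; split; last by move=> G GS; rewrite /h GS.
move=> s Hs; exists emb0; split => //.
have sS : forall G, G \in s -> G \in S by move=> G /Hs; rewrite /h; case: ifP.
split.
  exists 0 => q /mapP [G Gs ->] /=; rewrite subr0; exact: Hball (sS _ Gs).
set s' := [seq _ | G <- s].
move=> a b a0 b0 az bz sa sb.
have ss : size s' = size s by rewrite size_map.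
have x0 : ugraph p.+1 := Gc p 0.
pose g := fun i : 'I_(size s') => nth x0 s i.
have gS : forall i, g i \in S by move=> i; apply: sS; apply: mem_nth; rewrite -ss.
have nthE : forall i : 'I_(size s'), nth (0, false) s' i = (emb0 (g i), odflt false (h (g i))).
  by move=> i; rewrite (nth_map x0) // -ss.
have labE : forall i, odflt false (h (g i)) = tau (g i) by move=> i; rewrite /h gS.
pose V := \sum_i (a i - b i) *: phiWL R c0 rl T (g i).
match goal with |- is_true (Order.le _ (enorm ?X)) => have HV : X = beta *: V end.
  rewrite -sumrB scaler_sumr; apply: eq_bigr => i _; rewrite nthE /= Hemb //.
  by apply/matrixP => x y; rewrite !mxE; ring.
pose A G := \sum_(i | g i == G) a i.
pose B G := \sum_(i | g i == G) b i.
pose gam G := A G - B G.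
have HV0 : forall (i0 : 'I_1) k, V i0 k = \sum_(G in S)
    (if W c0 rl (nth (0, 0)%N (wl_idx c0 rl p.+1 T) k).1 (kd G) == (nth (0, 0)%N (wl_idx c0 rl p.+1 T) k).2
     then p.+1%:R * gam G else 0).
  move=> i0 k; rewrite summxE (partition_big g (mem S)) //=; apply: eq_bigr => G GS.
  rewrite (eq_bigr (fun i => (a i - b i) * (if W c0 rl (nth (0, 0)%N (wl_idx c0 rl p.+1 T) k).1 (kd G) == (nth (0, 0)%N (wl_idx c0 rl p.+1 T) k).2
     then p.+1%:R else 0))); last first.
    by move=> i /eqP <-; rewrite mxE (ord1 i0) (phi_entry (Hreg _ (gS i))).
  rewrite -mulr_suml /gam /A /B sumrB; case: ifP => _; [by rewrite mulrC | by rewrite mulr0].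
have Hsq : T%:R * p.+1%:R ^+ 2 * \sum_(G in S) gam G ^+ 2 <= sumsq V.
  rewrite (sumsq_eq (HV0 0)).
  rewrite (sum_idx _ _ (fun q => (\sum_(G in S) (if W c0 rl q.1 (kd G) == q.2 then p.+1%:R * gam G else 0)) ^+ 2)).
  rewrite [iota 0 T.+1]/= big_cons.
  rewrite [X in _ <= _ + X](eq_big_seq (fun _ => p.+1%:R ^+ 2 * \sum_(G in S) gam G ^+ 2)); last first.
    move=> t ti; move: ti; rewrite mem_iota => /andP [t1 _] /=.
    rewrite (sq_sum_ind (f := fun G => W c0 rl t (kd G)) (fun G => p.+1%:R * gam G)).
    - by rewrite mulr_sumr; apply: eq_bigr => G _; rewrite exprMn.
    - by move=> G1 G2 G1S G2S /(W_inj Hrl t1) /kinj; apply.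
    - exact: undup_uniq.
    - by move=> G GS; apply: (W_in_Sigma (Hreg _ GS)).
  rewrite sum_iota_const.
  have -> : (p.+1%:R ^+ 2 * \sum_(G in S) gam G ^+ 2) *+ T = T%:R * p.+1%:R ^+ 2 * \sum_(G in S) gam G ^+ 2.
    by rewrite -mulr_natl mulrA.
  apply: ler_wpDl => //.
  by apply: sumr_ge0 => c _; apply: sqr_ge0.
have AB : forall G, G \in S -> A G * B G = 0.
  move=> G GS; case tG: (tau G).
    rewrite /A big1 ?mul0r // => i /eqP giG; apply: az; rewrite nthE /= labE giG tG //.
  rewrite /B [X in _ * X]big1 ?mulr0 // => i /eqP giG; apply: bz; rewrite nthE /= labE giG tG //.
have sumA : \sum_(G in S) A G = 1 by rewrite -sa (part_sum _ gS).
have sumB : \sum_(G in S) B G = 1 by rewrite -sb (part_sum _ gS).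
have gamE : \sum_(G in S) gam G ^+ 2 = \sum_(G in S) (A G + B G) ^+ 2.
  apply: eq_bigr => G GS; have := AB G GS; rewrite /gam => h0.
  have -> : (A G - B G) ^+ 2 = (A G + B G) ^+ 2 - 4 * (A G * B G) by ring.
  by rewrite h0 mulr0 subr0.
have H4 : 4 <= #|S|%:R * \sum_(G in S) gam G ^+ 2.
  rewrite gamE; apply: le_trans (CS _ _); rewrite big_split /= sumA sumB; lra.
rewrite HV enorm_ge ?mulr_ge0 // sumsqZ.
case: Hm => [S1|Hm].
  exfalso; move: S1; rewrite leq_eqVlt ltnS leqn0 cards_eq0 => /orP [/cards1P [G0 SG0]|/eqP S0].
    move: sumA sumB (AB G0); rewrite SG0 !big_set1 => -> ->; rewrite inE eqxx mulr1 => /(_ isT) /eqP.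
    by rewrite oner_eq0.
  by move: sumA; rewrite S0 big_set0 => /eqP; rewrite eq_sym oner_eq0.
have G0 : 0 <= \sum_(G in S) gam G ^+ 2 by apply: sumr_ge0 => G _; apply: sqr_ge0.
have b2 : 0 <= beta ^+ 2 by apply: sqr_ge0.
have l2 : 0 <= lam ^+ 2 by apply: sqr_ge0.
have H5 : beta ^+ 2 * (T%:R * p.+1%:R ^+ 2 * \sum_(G in S) gam G ^+ 2) <= beta ^+ 2 * sumsq V.
  by apply: ler_wpM2l.
have H6 : 4 * lam ^+ 2 <= lam ^+ 2 * (#|S|%:R * \sum_(G in S) gam G ^+ 2).
  by rewrite [4 * _]mulrC; apply: ler_wpM2l.
have H7 : #|S|%:R * lam ^+ 2 * \sum_(G in S) gam G ^+ 2 <= beta ^+ 2 * T%:R * p.+1%:R ^+ 2 * \sum_(G in S) gam G ^+ 2.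
  by apply: ler_wpM2r.
rewrite expr2 in H6 H5 H7 *.
nra.
Qed.

End Lower.

Section Final.
Variable R : realType.

Lemma VCdim_le n (C : pconcept n -> Prop) (B : R) : 0 <= B ->
  (forall S, shattered C S -> #|S|%:R <= B) -> (VCdim C)%:R <= B.
Proof.
move=> B0 H; rewrite /VCdim; elim/big_ind: _ => //.
  by move=> x y hx hy; rewrite /maxn; case: ltnP.
by move=> S /asboolP; apply: H.
Qed.

Lemma VCdim_ge n (C : pconcept n -> Prop) S : shattered C S -> (#|S| <= VCdim C)%N.
Proof.
move=> H; rewrite /VCdim.
exact: (@leq_bigmax_cond _ (fun S => `[< shattered C S >]) (fun S : {set ugraph n} => #|S|) S (asboolT H)).
Qed.

Lemma choose_m (y : R) n : 0 <= y -> y <= n%:R -> (1 <= n)%N ->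
  exists m : nat, [/\ (1 <= m)%N, ((m <= 1)%N \/ (m.*2 <= n)%N),
     ((m <= 1)%N \/ m%:R <= y) & y / 4 <= m%:R].
Proof.
move=> y0 yn n1.
set t := Num.truncn y.
have [tl tu] : t%:R <= y /\ y < t.+1%:R by have := truncn_itv y0; case/andP.
exists (maxn 1 (minn t n./2))%N; split.
- by rewrite leq_max leqnn.
- case: (leqP (minn t n./2) 1) => h; first by left.
  right; lia.
- case: (leqP (minn t n./2) 1) => h; first by left.
  right; apply: le_trans tl; rewrite ler_nat; lia.
- have h1 : y / 4 <= 1 \/ y / 4 <= (minn t n./2)%:R.
    case: (posnP t) => t0.
      by left; move: tu; rewrite t0 /=; lra.
    case: (posnP n./2) => n0.
      left; have : n = 1%N by lia.
      by move=> n1'; move: yn; rewrite n1' /=; lra.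
    right; case: (leqP t n./2) => h.
      move: tu; rewrite -addn1 natrD.
      have : 1 <= t%:R :> R by rewrite ler1n.
      lra.
    have : (n%:R : R) <= 4 * (n./2)%:R.
      have -> : (4 : R) = 4%:R by [].
      by rewrite -natrM ler_nat; lia.
    lra.
  case: h1 => h1; apply: le_trans h1 _; last by rewrite ler_nat leq_maxr.
  by rewrite (ler_nat R 1) leq_maxl.
Qed.


Lemma enorm_sumsq d (x : 'rV[R]_d) : enorm x = Num.sqrt (sumsq x).
Proof. by []. Qed.

Lemma fam_lower c0 rl (Hrl : relabel_injective rl) p T m (lam beta r : R)
  (E : (ugraph p.+1 -> 'rV[R]_(dT c0 rl p.+1 T)) -> Prop) emb0 :
  (0 < T)%N -> 0 <= lam -> E emb0 ->
  (forall d, emb0 (Gc p d) = beta *: phiWL R c0 rl T (Gc p d)) ->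
  (forall d, enorm (emb0 (Gc p d)) <= r) ->
  ((m <= 1)%N \/ (m.*2 <= p.+1)%N) ->
  (m <= 1)%N \/ m%:R * lam ^+ 2 <= beta ^+ 2 * T%:R * p.+1%:R ^+ 2 ->
  (m <= VCdim (Hclass E r lam))%N.
Proof.
move=> T0 l0 Ee He Hb hm hl.
have cS := Sfam_card hm.
rewrite -{1}cS; apply: VCdim_ge.
apply: (VC_lower Hrl (kd := fun G => #|[set u | adj G ord0 u]|) T0 l0 Ee).
- by move=> G /imsetP [d _ ->]; apply: He.
- by move=> G /imsetP [d _ ->]; apply: Hb.
- move=> G1 G2 /imsetP [d1 _ ->] /imsetP [d2 _ ->]; rewrite !Gc_reg => /(Dset_inj hm) -> //.
- by move=> G /imsetP [d _ ->] v; rewrite !Gc_reg.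
- by rewrite cS.
Qed.

End Final.



Unset Implicit Arguments.

Theorem theorem4 (R : realType) (c0 : nat) (rl : nat -> seq nat -> nat)
  (Hrl : relabel_injective rl) :
  (exists c1 c2 : R, 0 < c1 /\ 0 < c2 /\
    forall (T n : nat) (lam : R), (0 < T)%N -> 0 < lam ->
      let r := Num.sqrt (T.+1)%:R * n%:R in
      r ^+ 2 / lam ^+ 2 <= n%:R ->
      c1 * (r ^+ 2 / lam ^+ 2) <= (VCdim (Hclass (E_WL R c0 rl n T) r lam))%:R
      /\ (VCdim (Hclass (E_WL R c0 rl n T) r lam))%:R <= c2 * (1 + r ^+ 2 / lam ^+ 2))
  /\
  (exists c1 c2 : R, 0 < c1 /\ 0 < c2 /\
    forall (T n : nat) (lam : R), (0 < T)%N -> 0 < lam ->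
      let r := Num.sqrt (T%:R / (T.+1)%:R) in
      r ^+ 2 / lam ^+ 2 <= n%:R ->
      c1 * (1 / lam ^+ 2) <= (VCdim (Hclass (Ebar_WL R c0 rl n T) 1 lam))%:R
      /\ (VCdim (Hclass (Ebar_WL R c0 rl n T) 1 lam))%:R <= c2 * (1 + 1 / lam ^+ 2)).
Proof.
split.
  exists (1 / 8), 2; split; first lra; split; first lra.
  move=> T n lam T0 lam0.
  have L0 : 0 < lam ^+ 2 by rewrite exprn_gt0.
  have U : forall r : R, (VCdim (Hclass (E_WL R c0 rl n T) r lam))%:R <= 2 * (1 + r ^+ 2 / lam ^+ 2).
    move=> r; have x0 : 0 <= r ^+ 2 / lam ^+ 2 by rewrite divr_ge0 ?sqr_ge0 // ltW.
    apply: le_trans (VCdim_le (B := 2 * (r ^+ 2 / lam ^+ 2) + 1) _ _) _.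
    - lra.
    - by move=> S; apply: (VC_upper_set (emb0 := phiWL R c0 rl T)).
    - lra.
  case: n U => [|p] U r hx; (split; last exact: U).
    by rewrite /r mulr0 expr0n /= mul0r mulr0.
  have T1 : 1 <= T%:R :> R by rewrite ler1n.
  have r2 : r ^+ 2 = T.+1%:R * p.+1%:R ^+ 2 by rewrite /r exprMn sqr_sqrtr.
  set K := p.+1%:R ^+ 2 / lam ^+ 2.
  have K0 : 0 <= K by rewrite divr_ge0 ?sqr_ge0 // ltW.
  have xE : r ^+ 2 / lam ^+ 2 = T.+1%:R * K by rewrite r2 /K mulrA.
  set q := T%:R * K.
  have q0 : 0 <= q by rewrite /q mulr_ge0 // ler0n.
  have qx : q <= r ^+ 2 / lam ^+ 2 by rewrite xE /q -addn1 natrD mulrDl ler_wpDr // mul1r.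
  have xq : r ^+ 2 / lam ^+ 2 <= 2 * q by rewrite xE /q -addn1 natrD; nra.
  have [m [m1 hm hmq mq]] := choose_m q0 (le_trans qx hx) (ltn0Sn p).
  have := @fam_lower R c0 rl Hrl p T m lam 1 r (E_WL R c0 rl p.+1 T) (phiWL R c0 rl T)
    T0 (ltW lam0) erefl.
  move=> /(_ (fun d => esym (scale1r _))) H.
  have Hb : forall d, enorm (phiWL R c0 rl T (Gc p d)) <= r.
    move=> d; rewrite enorm_le; last by rewrite /r mulr_ge0 ?sqrtr_ge0 ?ler0n.
    by rewrite (sumsq_phi_reg R c0 rl T (Gc_reg d)) r2.
  have Hc : (m <= 1)%N \/ m%:R * lam ^+ 2 <= 1 ^+ 2 * T%:R * p.+1%:R ^+ 2.
    case: hmq => [h|h]; [by left | right].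
    rewrite expr1n mul1r; move: h; rewrite /q /K => h.
    have := ler_wpM2r (ltW L0) h; by rewrite mulrA mulfVK ?gt_eqF.
  have := H Hb hm Hc; rewrite -(ler_nat R) => HV.
  apply: le_trans HV; lra.
exists (1 / 8), 2; split; first lra; split; first lra.
move=> T n lam T0 lam0 r hq.
have L0 : 0 < lam ^+ 2 by rewrite exprn_gt0.
have i0 : 0 <= 1 / lam ^+ 2 by rewrite divr_ge0 // ltW.
split; last first.
  apply: le_trans (VCdim_le (B := 2 * (1 ^+ 2 / lam ^+ 2) + 1) _ _) _.
  - rewrite expr1n; lra.
  - by move=> S; apply: (VC_upper_set (emb0 := phiWLbar R c0 rl T)).
  - rewrite expr1n; lra.
have T1 : 1 <= T%:R :> R by rewrite ler1n.
have Tp : 0 < T.+1%:R :> R by rewrite ltr0n.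
have r2 : r ^+ 2 = T%:R / T.+1%:R by rewrite /r sqr_sqrtr // divr_ge0 ?ler0n.
have TS : T.+1%:R = T%:R + 1 :> R by rewrite -[T.+1]addn1 natrD.
have r2h : 1 / 2 <= r ^+ 2.
  rewrite r2 ler_pdivlMr // TS; lra.
have r21 : r ^+ 2 <= 1.
  rewrite r2 ler_pdivrMr // mul1r ler_nat; exact: leqnSn.
set q := r ^+ 2 / lam ^+ 2.
have q0 : 0 <= q by rewrite /q divr_ge0 ?sqr_ge0 // ltW.
have qi : 1 / lam ^+ 2 <= 2 * q.
  rewrite /q mulrA; apply: ler_wpM2r; first by rewrite invr_ge0 ltW.
  lra.
case: n hq => [|p] hq.
  exfalso; have : 0 < q by rewrite /q divr_gt0 //; lra.
  move: hq; rewrite -/q ?mulr0n; lra.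
have [m [m1 hm hmq mq]] := choose_m q0 hq (ltn0Sn p).
set N := Num.sqrt (T.+1%:R * p.+1%:R ^+ 2) : R.
have N0 : 0 < N by rewrite /N sqrtr_gt0 mulr_gt0 // exprn_gt0 // ltr0n.
have N2 : N ^+ 2 = T.+1%:R * p.+1%:R ^+ 2 by rewrite /N sqr_sqrtr // mulr_ge0 // ?sqr_ge0 // ler0n.
have := @fam_lower R c0 rl Hrl p T m lam N^-1 1 (Ebar_WL R c0 rl p.+1 T) (phiWLbar R c0 rl T)
    T0 (ltW lam0) erefl.
have He : forall d, phiWLbar R c0 rl T (Gc p d) = N^-1 *: phiWL R c0 rl T (Gc p d).
  by move=> d; rewrite /phiWLbar enorm_sumsq (sumsq_phi_reg R c0 rl T (Gc_reg d)).
move=> /(_ He) H.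
have Hb : forall d, enorm (phiWLbar R c0 rl T (Gc p d)) <= 1.
  move=> d; rewrite He enorm_le // sumsqZ (sumsq_phi_reg R c0 rl T (Gc_reg d)) -N2 exprVn mulVf ?expr1n //.
  by rewrite gt_eqF // exprn_gt0.
have Hc : (m <= 1)%N \/ m%:R * lam ^+ 2 <= N^-1 ^+ 2 * T%:R * p.+1%:R ^+ 2.
  case: hmq => [h|h]; [by left | right].
  have -> : N^-1 ^+ 2 * T%:R * p.+1%:R ^+ 2 = r ^+ 2.
    rewrite r2 exprVn N2; field.
    have := ler0n R T; have := ler0n R p => hp hT.
    by apply/andP; split; apply/negP => /eqP; lra.
  move: h; rewrite /q => h.
  have := ler_wpM2r (ltW L0) h; by rewrite mulfVK ?gt_eqF.
have := H Hb hm Hc; rewrite -(ler_nat R) => HV.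
apply: le_trans HV; lra.
Qed.
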